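(* For every $t\in(0,1)$, $$\lim_{n \to \infty} \sum_{k \ge 0} B^{n-k}_k(t) = \frac{1}{1+t}.$$
   Context: The Bernstein polynomials are $B^m_k(t) = \binom{m}{k} t^k (1-t)^{m-k}$ for integers $0\le k\le m$, and $B^m_k(t)=0$ for $m<k$ (so only terms with $0\le k\le n/2$ contribute). *)

(* Defs.v *)
From mathcomp Require Import all_boot all_order all_algebra.
From mathcomp Require Import all_classical all_reals all_analysis.
Set Implicit Arguments. Unset Strict Implicit. Unset Printing Implicit Defensive.
Import Order.TTheory GRing.Theory Num.Theory.
Local Open Scope ring_scope.

Definition bernstein (R : realType) (m k : nat) (t : R) : R :=
  if (k <= m)%N then 'C(m, k)%:R * t ^+ k * (1 - t) ^+ (m - k) else 0.

(* Main.v *)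
Require Import Defs.
From mathcomp Require Import all_boot all_order all_algebra.
From mathcomp Require Import all_classical all_reals all_analysis.
From mathcomp Require Import ring lra zify.
Import Order.TTheory GRing.Theory Num.Theory numFieldNormedType.Exports.
Local Open Scope classical_set_scope.
Local Open Scope ring_scope.

Section Aux.
Variables (R : realType) (t : R).
Local Notation b m k := (bernstein m k t).

Lemma bz m k : (m < k)%N -> b m k = 0.
Proof. by move=> h; rewrite /bernstein leqNgt h. Qed.

Lemma b0 m : b m.+1 0 = (1 - t) * b m 0.
Proof. by rewrite /bernstein /= !bin0 !subn0 !mul1r exprS. Qed.

Lemma bS m k : b m.+1 k.+1 = (1 - t) * b m k.+1 + t * b m k.
Proof.
rewrite /bernstein ltnS.
case: (ltngtP k m) => [hkm|hmk|->].
- rewrite /= binS natrD subSS.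
  have -> : (m - k = (m - k.+1).+1)%N by rewrite subnSK.
  rewrite !exprS; ring.
- rewrite /=; ring.
- rewrite /= !subnn !binn exprS; ring.
Qed.

Definition a n := \sum_(k < n.+1) b (n - k) k.

Lemma a_rec n : a n.+2 = (1 - t) * a n.+1 + t * a n.
Proof.
rewrite /a big_ord_recl subn0 b0.
have H : forall j : 'I_n.+2, b (n.+2 - lift ord0 j) (lift ord0 j) =
   (1 - t) * b (n - j) j.+1 + t * b (n - j) j.
  move=> j; rewrite /= /bump /= add1n subSS.
  case: (leqP j n) => hj.
  - by rewrite subSn // bS.
  - have hj' : j = n.+1 :> nat by apply/eqP; rewrite eqn_leq hj -ltnS ltn_ord.
    have e : (n - n.+1 = 0)%N by apply/eqP; rewrite subn_eq0.
    rewrite hj' subnn e !bz //; ring.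
rewrite (eq_bigr _ (fun j _ => H j)) big_split /= -!mulr_sumr.
have E1 : \sum_(i < n.+2) b (n - i) i = \sum_(i < n.+1) b (n - i) i.
  by rewrite big_ord_recr /= bz ?addr0 //; lia.
have E2 : \sum_(k < n.+2) b (n.+1 - k) k = b n.+1 0 + \sum_(i < n.+2) b (n - i) i.+1.
  rewrite big_ord_recl subn0 [in RHS]big_ord_recr /= [X in _ = _ + (_ + X)]bz ?addr0; last by lia.
  congr (_ + _); apply: eq_bigr => i _; rewrite /= /bump /= add1n subSS //.
rewrite E1 E2; ring.
Qed.

Lemma a_closed n : a n * (1 + t) = 1 - (- t) ^+ n.+1.
Proof.
elim/ltn_ind: n => -[|[|n]] IH.
- by rewrite /a big_ord1 /bernstein /= bin0 !expr0 !mul1r expr1; ring.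
- rewrite /a big_ord_recr big_ord1 /bernstein /= !subn0 bin0 expr0 expr1 sqrrN expr2.
  rewrite mul1r mul1r addr0; ring.
- rewrite a_rec mulrDl -!mulrA !IH //.
  rewrite !exprS; ring.
Qed.
End Aux.

Theorem mainTheorem8 (R : realType) (t : R) (ht0 : 0 < t) (ht1 : t < 1) :
  (fun n : nat => \sum_(0 <= k < n.+1) bernstein (n - k) k t) @ \oo --> ((1 + t)^-1 : R).
Proof.
have ht : 1 + t != 0 by rewrite gt_eqF // ltr_wpDr ?ltW.
have -> : (fun n : nat => \sum_(0 <= k < n.+1) bernstein (n - k) k t) =
          (fun n => (1 - (- t) ^+ n.+1) * (1 + t)^-1).
  by apply: funext => n; rewrite big_mkord -(a_closed R t n) mulfK.
have L : (fun n : nat => (1 - (- t) ^+ n.+1) * (1 + t)^-1) @ \oo --> (1 - 0) * (1 + t)^-1.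
  apply: cvgM; last exact: cvg_cst.
  apply: cvgB; first exact: cvg_cst.
  rewrite (cvg_shiftS (fun n => (- t) ^+ n)).
  by apply: cvg_expr; rewrite normrN gtr0_norm.
by rewrite subr0 mul1r in L.
Qed.
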